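(* Let $H$ be a Heyting algebra, $n\ge1$, and let $f_1,\dots,f_n:H\to H$ be monotone polynomials each having a least fixed point $\mu_x.f_i(x)$. Then $x\mapsto\bigwedge_{i=1}^n f_i(x)$ has a least fixed point and $\mu_x.\bigwedge_{i=1}^n f_i(x)=\bigwedge_{i=1}^n\mu_x.f_i(x)$.
   Context: A function $f:H\to H$ is a polynomial if there exist an IPC formula $\phi$, a variable $x$ and a valuation $v$ in $H$ of the variables of $\phi$ other than $x$ such that $f(h)=[\![\phi]\!]_{(v,h/x)}$ for every $h\in H$. Least fixed points are least prefixed points. *)

(* Defs.v *)
From Stdlib Require Import Arith PeanoNat.

Record HeytingAlgebra := {
  carrier :> Type;
  hle : carrier -> carrier -> Prop;
  hbot : carrier;
  htop : carrier;
  hmeet : carrier -> carrier -> carrier;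
  hjoin : carrier -> carrier -> carrier;
  himp : carrier -> carrier -> carrier;
  hle_refl : forall a, hle a a;
  hle_trans : forall a b c, hle a b -> hle b c -> hle a c;
  hle_antisym : forall a b, hle a b -> hle b a -> a = b;
  hbot_least : forall a, hle hbot a;
  htop_greatest : forall a, hle a htop;
  hmeet_glb : forall a b c, hle c (hmeet a b) <-> (hle c a /\ hle c b);
  hjoin_lub : forall a b c, hle (hjoin a b) c <-> (hle a c /\ hle b c);
  himp_residual : forall a b c, hle (hmeet c a) b <-> hle c (himp a b)
}.

Arguments hle {_} _ _.
Arguments hbot {_}.
Arguments htop {_}.
Arguments hmeet {_} _ _.
Arguments hjoin {_} _ _.
Arguments himp {_} _ _.

Inductive ipc_formula : Type :=
  | FVar : nat -> ipc_formula
  | FBot : ipc_formula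
  | FTop : ipc_formula
  | FAnd : ipc_formula -> ipc_formula -> ipc_formula
  | FOr  : ipc_formula -> ipc_formula -> ipc_formula
  | FImp : ipc_formula -> ipc_formula -> ipc_formula.

Fixpoint interp (H : HeytingAlgebra) (v : nat -> H) (phi : ipc_formula) : H :=
  match phi with
  | FVar k => v k
  | FBot => hbot
  | FTop => htop
  | FAnd p q => hmeet (interp H v p) (interp H v q)
  | FOr p q => hjoin (interp H v p) (interp H v q)
  | FImp p q => himp (interp H v p) (interp H v q)
  end.

Definition upd (H : HeytingAlgebra) (v : nat -> H) (x : nat) (h : H) : nat -> H :=
  fun k => if Nat.eqb k x then h else v k.

Definition polynomial (H : HeytingAlgebra) (f : H -> H) : Prop :=
  exists (phi : ipc_formula) (x : nat) (v : nat -> H),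
    forall h : H, f h = interp H (upd H v x h) phi.

Definition monotone (H : HeytingAlgebra) (f : H -> H) : Prop :=
  forall a b : H, hle a b -> hle (f a) (f b).

(* m is the least fixed point of f, understood (as in the paper) as the least
   prefixed point: f m <= m and m <= y whenever f y <= y. *)
Definition is_lfp (H : HeytingAlgebra) (f : H -> H) (m : H) : Prop :=
  hle (f m) m /\ forall y : H, hle (f y) y -> hle m y.

Fixpoint bigmeet (H : HeytingAlgebra) (n : nat) (g : nat -> H) : H :=
  match n with
  | 0 => htop
  | S k => hmeet (bigmeet H k g) (g k)
  end.

(* Main.v *)
Require Import Defs.
From Stdlib Require Import Arith PeanoNat Lia.

Section HA.
Variable H : HeytingAlgebra.

Lemma le_tr (a b c : H) : hle a b -> hle b c -> hle a c.
Proof. apply hle_trans. Qed.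
Lemma le_rf (a : H) : hle a a.
Proof. apply hle_refl. Qed.
Lemma meet_l (a b : H) : hle (hmeet a b) a.
Proof. apply (proj1 (proj1 (hmeet_glb H a b _) (le_rf _))). Qed.
Lemma meet_r (a b : H) : hle (hmeet a b) b.
Proof. apply (proj2 (proj1 (hmeet_glb H a b _) (le_rf _))). Qed.
Lemma meet_i (a b c : H) : hle c a -> hle c b -> hle c (hmeet a b).
Proof. intros; apply hmeet_glb; auto. Qed.
Lemma join_l (a b : H) : hle a (hjoin a b).
Proof. apply (proj1 (proj1 (hjoin_lub H a b _) (le_rf _))). Qed.
Lemma join_r (a b : H) : hle b (hjoin a b).
Proof. apply (proj2 (proj1 (hjoin_lub H a b _) (le_rf _))). Qed.
Lemma join_e (a b c : H) : hle a c -> hle b c -> hle (hjoin a b) c.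
Proof. intros; apply hjoin_lub; auto. Qed.
Lemma imp_i (a b c : H) : hle (hmeet c a) b -> hle c (himp a b).
Proof. apply himp_residual. Qed.
Lemma imp_e (a b c : H) : hle c (himp a b) -> hle (hmeet c a) b.
Proof. apply himp_residual. Qed.
Lemma meet_c (a b : H) : hle (hmeet a b) (hmeet b a).
Proof. apply meet_i; [apply meet_r|apply meet_l]. Qed.
Lemma mp (a b : H) : hle (hmeet (himp a b) a) b.
Proof. apply imp_e, le_rf. Qed.

Lemma cong (a : H) (v w : nat -> H) :
  (forall k, hle (hmeet a (v k)) (w k) /\ hle (hmeet a (w k)) (v k)) ->
  forall phi, hle (hmeet a (interp H v phi)) (interp H w phi)
           /\ hle (hmeet a (interp H w phi)) (interp H v phi).
Proof.
  intros Hk phi; induction phi as [k| | |p [IHp1 IHp2] q [IHq1 IHq2]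
    |p [IHp1 IHp2] q [IHq1 IHq2]|p [IHp1 IHp2] q [IHq1 IHq2]]; simpl.
  - apply Hk.
  - split; apply meet_r.
  - split; apply htop_greatest.
  - split; apply meet_i.
    + eapply le_tr; [|apply IHp1]. apply meet_i; [apply meet_l|].
      eapply le_tr; [apply meet_r|apply meet_l].
    + eapply le_tr; [|apply IHq1]. apply meet_i; [apply meet_l|].
      eapply le_tr; [apply meet_r|apply meet_r].
    + eapply le_tr; [|apply IHp2]. apply meet_i; [apply meet_l|].
      eapply le_tr; [apply meet_r|apply meet_l].
    + eapply le_tr; [|apply IHq2]. apply meet_i; [apply meet_l|].
      eapply le_tr; [apply meet_r|apply meet_r].
  - split; (eapply le_tr; [apply meet_c|]); apply imp_e; apply join_e; apply imp_i;
      (eapply le_tr; [apply meet_c|]).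
    + eapply le_tr; [apply IHp1|apply join_l].
    + eapply le_tr; [apply IHq1|apply join_r].
    + eapply le_tr; [apply IHp2|apply join_l].
    + eapply le_tr; [apply IHq2|apply join_r].
  - split; apply imp_i.
    + eapply le_tr; [|apply IHq1]. apply meet_i.
      * eapply le_tr; [apply meet_l|apply meet_l].
      * eapply le_tr; [|apply mp]. apply meet_i.
        -- eapply le_tr; [apply meet_l|apply meet_r].
        -- eapply le_tr; [|apply IHp2]. apply meet_i.
           ++ eapply le_tr; [apply meet_l|apply meet_l].
           ++ apply meet_r.
    + eapply le_tr; [|apply IHq2]. apply meet_i.
      * eapply le_tr; [apply meet_l|apply meet_l].
      * eapply le_tr; [|apply mp]. apply meet_i.
        -- eapply le_tr; [apply meet_l|apply meet_r].
        -- eapply le_tr; [|apply IHp1]. apply meet_i.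
           ++ eapply le_tr; [apply meet_l|apply meet_l].
           ++ apply meet_r.
Qed.

Lemma poly_cong (f : H -> H) : polynomial H f ->
  forall a h, hle (hmeet a (f h)) (f (hmeet a h)).
Proof.
  intros [phi [x [v Hf]]] a h. rewrite !Hf.
  apply (cong a (upd H v x h) (upd H v x (hmeet a h))).
  intro k; unfold upd; destruct (Nat.eqb k x).
  - split; [apply le_rf|]. eapply le_tr; [apply meet_r|apply meet_r].
  - split; apply meet_r.
Qed.

Lemma keyL (f : H -> H) (m : H) : polynomial H f -> monotone H f -> is_lfp H f m ->
  forall c y, hle (hmeet c (f y)) y -> hle (hmeet c m) y.
Proof.
  intros Hp Hm [_ Hl] c y Hc.
  apply (le_tr _ _ _ (meet_c _ _)). apply imp_e. apply Hl.
  apply imp_i. eapply le_tr; [apply meet_c|]. eapply le_tr; [|apply Hc].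
  apply meet_i; [apply meet_l|].
  eapply le_tr; [apply poly_cong; exact Hp|]. apply Hm.
  apply (le_tr _ _ _ (meet_c _ _)). apply mp.
Qed.
End HA.

Theorem mainTheorem7 (H : HeytingAlgebra) (n : nat) (f : nat -> H -> H)
    (mu : nat -> H) :
  1 <= n ->
  (forall i, i < n -> polynomial H (f i)) ->
  (forall i, i < n -> monotone H (f i)) ->
  (forall i, i < n -> is_lfp H (f i) (mu i)) ->
  is_lfp H (fun x => bigmeet H n (fun i => f i x)) (bigmeet H n mu).
Proof.
  intros _ Hp Hm Hl. split.
  - assert (G : forall k, k <= n ->
      hle (bigmeet H k (fun i => f i (bigmeet H n mu))) (bigmeet H k mu)).
    { induction k as [|k IH]; intros Hk; simpl.
      + apply htop_greatest.
      + apply meet_i.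
        * eapply le_tr; [apply meet_l|apply IH; lia].
        * eapply le_tr; [apply meet_r|].
          eapply le_tr; [|apply (proj1 (Hl k ltac:(lia)))]. apply Hm; [lia|].
          clear IH. assert (k < n) by lia. clear Hk.
          induction n as [|n IHn]; [lia|]. simpl.
          destruct (Nat.eq_dec k n) as [->|Hne]; [apply meet_r|].
          eapply le_tr; [apply meet_l|]. apply IHn.
          -- intros; apply Hp; lia.
          -- intros; apply Hm; lia.
          -- intros; apply Hl; lia.
          -- lia. }
    apply G; lia.
  - intros y Hy.
    assert (G : forall k, k <= n -> forall c,
      hle (hmeet c (bigmeet H k (fun i => f i y))) y ->
      hle (hmeet c (bigmeet H k mu)) y).
    { induction k as [|k IH]; intros Hk c Hc; simpl in *.
      + exact Hc.
      + assert (E : hle (hmeet (hmeet c (mu k)) (bigmeet H k (fun i => f i y))) y).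
        { eapply le_tr; [|apply (keyL H (f k) (mu k) (Hp k ltac:(lia)) (Hm k ltac:(lia))
              (Hl k ltac:(lia)) (hmeet c (bigmeet H k (fun i => f i y))) y)].
          - apply meet_i; [apply meet_i|].
            + eapply le_tr; [apply meet_l|apply meet_l].
            + apply meet_r.
            + eapply le_tr; [apply meet_l|apply meet_r].
          - eapply le_tr; [|apply Hc]. apply meet_i; [|apply meet_i].
            + eapply le_tr; [apply meet_l|apply meet_l].
            + eapply le_tr; [apply meet_l|apply meet_r].
            + apply meet_r. }
        eapply le_tr; [|apply (IH ltac:(lia) _ E)].
        apply meet_i; [apply meet_i|].
        * apply meet_l.
        * eapply le_tr; [apply meet_r|apply meet_r].
        * eapply le_tr; [apply meet_r|apply meet_l]. }
    eapply le_tr; [|apply (G n (le_n n) htop)].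
    + apply meet_i; [apply htop_greatest|apply le_rf].
    + eapply le_tr; [apply meet_r|exact Hy].
Qed.
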